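(* Let $\mathbb{K}$ be a field and $\mathcal{S}$ a linear subspace of $\mathrm{M}_{n,p}(\mathbb{K})$ with $\operatorname{codim}\mathcal{S}\leq 2n-3$, such that every $M\in\mathcal{S}$ has the form $M=\begin{bmatrix}m_{1,1}&L(M)\\ 0_{(n-1)\times 1}&K(M)\end{bmatrix}$ (with $L(M)\in\mathrm{M}_{1,p-1}(\mathbb{K})$, $K(M)\in\mathrm{M}_{n-1,p-1}(\mathbb{K})$) and some $M\in\mathcal{S}$ has a nonzero first column. Let $q\geq 1$. Then the range-preserving group homomorphisms $F:\mathcal{S}\to\mathrm{M}_{n,q}(\mathbb{K})$ are exactly the maps $$M\longmapsto\begin{bmatrix}R(m_{1,1}) & L(M)+R'(m_{1,1})\\ 0_{(n-1)\times(q-p+1)} & K(M)\end{bmatrix}Q,$$ where $Q\in\mathrm{GL}_q(\mathbb{K})$ and $R:\mathbb{K}\to\mathrm{M}_{1,q-p+1}(\mathbb{K})$, $R':\mathbb{K}\to\mathrm{M}_{1,p-1}(\mathbb{K})$ are group homomorphisms with $R$ injective. Such homomorphisms exist if and only if $q\geq p$.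
   Context: A map $F:\mathcal{S}\to\mathrm{M}_{n,q}(\mathbb{K})$ is range-preserving when the column space of $F(M)$ equals that of $M$ for all $M\in\mathcal{S}$. *)

(* Defs.v *)
From HB Require Import structures.
From mathcomp Require Import all_boot all_order all_algebra.
Set Implicit Arguments. Unset Strict Implicit. Unset Printing Implicit Defensive.
Import GRing.Theory.
Local Open Scope ring_scope.

Definition codim (K : fieldType) (vT : vectType K) (S : {vspace vT}) : nat :=
  (\dim (fullv : {vspace vT}) - \dim S)%N.

Definition same_colspace (K : fieldType) (m n1 n2 : nat)
  (A : 'M[K]_(m, n1)) (B : 'M[K]_(m, n2)) : bool := (A^T == B^T)%MS.

(* F : S -> M_{m,q}(K) is a range-preserving group homomorphism
   (F is given as a total function; only its values on S matter). *)
Definition range_preserving_hom (K : fieldType) (m p q : nat)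
  (S : {vspace 'M[K]_(m, p)}) (F : 'M[K]_(m, p) -> 'M[K]_(m, q)) : Prop :=
  {in S &, forall A B, F (A + B) = F A + F B} /\
  {in S, forall M, same_colspace (F M) M}.

(* Main.v *)
Require Import Defs.
From HB Require Import structures.
From mathcomp Require Import all_boot all_order all_algebra.
From Stdlib Require Import Classical Lia.
From mathcomp Require Import zify.
Import GRing.Theory.
Local Open Scope ring_scope.
Set Implicit Arguments. Unset Strict Implicit. Unset Printing Implicit Defensive.

Definition inUcol (K : fieldType) (n p : nat) (U : {vspace 'cV[K]_n})
  (x : 'cV[K]_n) (N : 'M[K]_(n,p)) : Prop :=
  exists2 u, u \in U & exists z : 'cV[K]_p, x = u + N *m z.

Definition Wv (K : fieldType) (n p : nat) (S : {vspace 'M[K]_(n,1+p)}) :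
  {vspace 'M[K]_(n,1)} := (linfun (@lsubmx K n 1 p) @: S)%VS.
Definition Wr (K : fieldType) (n p : nat) (S : {vspace 'M[K]_(n,1+p)}) :
  {vspace 'M[K]_(n,p)} :=
  (linfun (@rsubmx K n 1 p) @: (S :&: lker (linfun (@lsubmx K n 1 p))))%VS.

Lemma Wr_mem (K : fieldType) n p (S : {vspace 'M[K]_(n,1+p)}) w :
  w \in Wr S -> row_mx 0 w \in S.
Proof.
case/memv_imgP=> M /memv_capP[MS]; rewrite memv_ker !lfunE /= => /eqP M0 ->.
by rewrite -M0 hsubmxK.
Qed.

Lemma mem_Wr (K : fieldType) n p (S : {vspace 'M[K]_(n,1+p)}) w :
  row_mx 0 w \in S -> w \in Wr S.
Proof.
move=> h; have -> : w = linfun (@rsubmx K n 1 p) (row_mx 0 w) by rewrite lfunE /= row_mxKr.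
apply: memv_img; rewrite memv_cap h memv_ker lfunE /= row_mxKl eqxx.
done.
Qed.

Lemma Wv_mem (K : fieldType) n p (S : {vspace 'M[K]_(n,1+p)}) M :
  M \in S -> lsubmx M \in Wv S.
Proof. by move=> h; rewrite -[lsubmx M](lfunE (@lsubmx K n 1 p)); apply: memv_img. Qed.

Lemma Wv_memP (K : fieldType) n p (S : {vspace 'M[K]_(n,1+p)}) c :
  c \in Wv S -> exists2 M, M \in S & lsubmx M = c.
Proof. by case/memv_imgP=> M MS ->; exists M; rewrite ?lfunE. Qed.

Lemma natmulE (a b : nat) : (a * b)%R = (a * b)%N. Proof. by []. Qed.

Lemma dim_Wv_le (K : fieldType) n p (S : {vspace 'M[K]_(n,1+p)}) :
  (\dim (Wv S) <= n)%N.
Proof.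
by have := dimvS (subvf (Wv S)); rewrite dimvf /= dim_matrix natmulE muln1.
Qed.

Lemma dim_WrWv (K : fieldType) n p (S : {vspace 'M[K]_(n,1+p)}) :
  (codim (Wr S) + n = codim S + \dim (Wv S))%N.
Proof.
rewrite /codim !dimvf /= !dim_matrix !natmulE.
set f := linfun (@lsubmx K n 1 p); set g := linfun (@rsubmx K n 1 p).
have h1 := limg_ker_dim f S.
have h2 := limg_ker_dim g (S :&: lker f).
have h3 : (S :&: lker f :&: lker g = 0)%VS.
  apply/eqP; rewrite -subv0; apply/subvP=> M /memv_capP[/memv_capP[_]].
  rewrite !memv_ker !lfunE /= => /eqP h /eqP h'.
  by rewrite memv0 -[M]hsubmxK h h' row_mx0.
rewrite h3 dimv0 add0n in h2.
have h4 : (\dim S <= n * (1 + p))%N.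
  by have := dimvS (subvf S); rewrite dimvf /= dim_matrix natmulE.
have h5 : (\dim (Wr S) <= n * p)%N.
  by have := dimvS (subvf (Wr S)); rewrite dimvf /= dim_matrix natmulE.
rewrite /Wr -/f -/g h2 in h5 *.
rewrite /Wv -/f; move: h1 h4 h5; rewrite capvC mulnDr muln1.
move: (\dim (lker f :&: S)) (\dim (f @: S)) (\dim S) (n * p)%N => a b s np; lia.
Qed.

Lemma row0_decomp (K : fieldType) n p (N0 w0 : 'M[K]_(n,1+p)) (w : 'M[K]_(n,p)) :
  N0 + (w0 + row_mx 0 w) = row_mx (lsubmx (N0 + w0)) (rsubmx (N0 + w0) + w).
Proof. by rewrite addrA -{1}[N0 + w0]hsubmxK add_row_mx addr0. Qed.

Lemma row_mul_split (K : fieldType) n p (c : 'M[K]_(n,1)) (X : 'M[K]_(n,p)) (z : 'cV[K]_(1+p)) :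
  row_mx c X *m z = c *m usubmx z + X *m dsubmx z.
Proof. by rewrite -{1}[z]vsubmxK mul_row_col. Qed.

Lemma mul_c11 (K : fieldType) n (c : 'M[K]_(n,1)) (t : 'M[K]_1) :
  c *m t = t 0 0 *: c.
Proof. by rewrite {1}[t]mx11_scalar mul_mx_scalar. Qed.

Lemma Bstar (K : fieldType) (n : nat) : forall p (W : {vspace 'M[K]_(n,p)})
  (N0 : 'M[K]_(n,p)) (U : {vspace 'cV[K]_n}) (x : 'cV[K]_n),
  (codim W + \dim U + 1 <= n)%N -> x \notin U ->
  exists2 w, w \in W & ~ inUcol U x (N0 + w).
Proof.
elim=> [|p IH].
  move=> W N0 U x hc hx; exists 0; first exact: mem0v.
  case=> u uU [z]; rewrite (thinmx0 (N0 + 0)) mul0mx addr0 => ex.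
  by rewrite ex uU in hx.
change p.+1 with (1 + p)%N; move=> W N0 U x hc hx.
have F2 := dim_WrWv W.
have hWv := dim_Wv_le W.
case: (classic (exists2 w0, w0 \in W & lsubmx (N0 + w0) = 0)) => [[w0 w0W e0]|nA].
  have hc' : (codim (Wr W) + \dim U + 1 <= n)%N by lia.
  have [w'' w''W hw] := IH (Wr W) (rsubmx (N0 + w0)) U x hc' hx.
  exists (w0 + row_mx 0 w''); first by rewrite memvD // Wr_mem.
  rewrite row0_decomp e0 => -[u uU [z ez]]; apply: hw; exists u => //.
  by exists (dsubmx z); rewrite ez row_mul_split mul0mx add0r.
have hlt : (\dim (Wv W) < n)%N.
  rewrite ltn_neqAle hWv andbT; apply/negP=> /eqP hd; apply: nA.
  have : (- lsubmx N0) \in Wv W.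
    have /eqP -> : Wv W == fullv.
      by rewrite eqEdim subvf dimvf /= dim_matrix natmulE muln1 hd.
    exact: memvf.
  case/Wv_memP=> w0 w0W e; exists w0 => //.
  by rewrite linearD /= e addrN.
have [w0 w0W hw0] : exists2 w0, w0 \in W & x \notin (U + <[lsubmx (N0 + w0)]>)%VS.
  apply: NNPP => hn.
  have hall : forall w0, w0 \in W -> lsubmx (N0 + w0) \in (U + <[x]>)%VS.
    move=> w0 w0W.
    have : x \in (U + <[lsubmx (N0 + w0)]>)%VS.
      by apply: NNPP => h; apply: hn; exists w0 => //; apply/negP.
    case/memv_addP=> u uU [v /vlineP[t ->] ex].
    have t0 : t != 0.
      by apply: contraNneq hx => t0; rewrite ex t0 scale0r addr0.
    have -> : lsubmx (N0 + w0) = t^-1 *: (x - u).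
      by rewrite ex (addrC u) addrK scalerA mulVf // scale1r.
    rewrite memvZ // memvB //; first exact: (subvP (addvSr U _)) _ (memv_line x).
    exact: (subvP (addvSl U _)).
  have sub : (Wv W <= U + <[x]>)%VS.
    apply/subvP=> c /Wv_memP[w0 w0W <-].
    have := hall w0 w0W; have := hall 0 (mem0v W).
    rewrite addr0 linearD /= => h1 h2.
    by rewrite -[lsubmx w0](addKr (lsubmx N0)) memvD ?memvN.
  have dimle : (\dim (U + <[x]>) <= \dim (Wv W))%N.
    have h1 := (dimv_add_leqif U <[x]>).1.
    have h2 := leq_b1 (x != 0); rewrite -dim_vline in h2.
    apply: (leq_trans h1); apply: (leq_trans (leq_add (leqnn _) h2)). move: hc F2; move: (codim W) (\dim U) (\dim (Wv W)) => cw du dw. lia.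
  have eqv : Wv W = (U + <[x]>)%VS by apply/eqP; rewrite eqEdim sub dimle.
  apply: nA.
  have : - lsubmx N0 \in Wv W.
    by rewrite eqv memvN; have := hall 0 (mem0v W); rewrite addr0.
  case/Wv_memP=> w1 w1W e; exists w1 => //.
  by rewrite linearD /= e addrN.
set U' := (U + <[lsubmx (N0 + w0)]>)%VS.
have hc' : (codim (Wr W) + \dim U' + 1 <= n)%N.
  have h1 := (dimv_add_leqif U <[lsubmx (N0 + w0)]>).1.
  have h2 := leq_b1 (lsubmx (N0 + w0) != 0); rewrite -dim_vline in h2.
  rewrite /U'; move: h1 h2 hc F2 hlt; move: (codim W) (codim (Wr W)) (\dim U) (\dim (Wv W)) (\dim (U + _)%VS) (\dim <[_]>%VS) => a b c d e f; lia.
have [w'' w''W hw] := IH (Wr W) (rsubmx (N0 + w0)) U' x hc' hw0.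
exists (w0 + row_mx 0 w''); first by rewrite memvD // Wr_mem.
rewrite row0_decomp => -[u uU [z ez]]; apply: hw.
exists (u + lsubmx (N0 + w0) *m usubmx z).
  by apply: memv_add => //; rewrite mul_c11 memvZ // memv_line.
by exists (dsubmx z); rewrite ez row_mul_split addrA.
Qed.

Lemma zm1 (V : zmodType) (g a b : V) : g + (a - b) - a = g - b.
Proof. by rewrite addrCA (addrC (a + _)) addKr. Qed.

Lemma lin2 (K : fieldType) (V : lmodType K) (a b : V) la lb mu :
  la *: a + lb *: b = mu *: a + mu *: b -> (lb - mu) *: b = (mu - la) *: a.
Proof.
move=> h; rewrite !scalerBl.
have -> : lb *: b = mu *: a + mu *: b - la *: a by rewrite -h (addrC (la *: a)) addrK.
by rewrite (addrAC (mu *: a)) addrK.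
Qed.

Definition ThmA_at (K : fieldType) n p : Prop :=
  forall (S : {vspace 'M[K]_(n,p)}) (G : 'M[K]_(n,p) -> 'cV[K]_n),
  (codim S + 2 <= n)%N -> {in S &, forall A B, G (A + B) = G A + G B} ->
  {in S, forall M, exists z, G M = M *m z} ->
  exists y, {in S, forall M, G M = M *m y}.

Lemma Step (K : fieldType) n p (S : {vspace 'M[K]_(n,1+p)})
  (G : 'M[K]_(n,1+p) -> 'cV[K]_n) :
  ThmA_at K n p -> (codim S + \dim (Wv S) + 2 <= 2 * n)%N ->
  {in S &, forall A B, G (A + B) = G A + G B} ->
  {in S, forall M, exists z, G M = M *m z} ->
  exists y : 'cV[K]_p,
   (forall M, M \in S -> G M - rsubmx M *m y \in <[lsubmx M]>%VS) /\
   (forall M1 M2, M1 \in S -> M2 \in S -> lsubmx M1 = lsubmx M2 ->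
       G M1 - rsubmx M1 *m y = G M2 - rsubmx M2 *m y).
Proof.
move=> hA hc Gadd Grc.
have F2 := dim_WrWv S.
have hc' : (codim (Wr S) + 2 <= n)%N.
  move: hc F2; move: (codim S) (codim (Wr S)) (\dim (Wv S)) => a b c; lia.
have [y hy] : exists y, {in Wr S, forall N, G (row_mx 0 N) = N *m y}.
  apply: (hA _ (fun N => G (row_mx 0 N))) => //.
    move=> A B AS BS /=.
    by rewrite -{1}[0 : 'M_(n,1)]addr0 -add_row_mx Gadd ?Wr_mem.
  move=> N NS; have [z ->] := Grc _ (Wr_mem NS); exists (dsubmx z).
  by rewrite row_mul_split mul0mx add0r.
have fib : forall M1 M2, M1 \in S -> M2 \in S -> lsubmx M1 = lsubmx M2 ->
       G M1 - rsubmx M1 *m y = G M2 - rsubmx M2 *m y.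
  move=> M1 M2 M1S M2S e.
  have DS : M1 - M2 \in S by rewrite memvB.
  have eD : M1 - M2 = row_mx 0 (rsubmx (M1 - M2)).
    by rewrite -{1}[M1 - M2]hsubmxK linearB /= e subrr.
  have hD : rsubmx (M1 - M2) \in Wr S by apply: mem_Wr; rewrite -eD.
  have := hy _ hD; rewrite -eD => hG.
  have -> : G M1 = G M2 + G (M1 - M2) by rewrite -Gadd // addrC subrK.
  by rewrite hG linearB /= mulmxBl zm1.
exists y; split => // M MS.
apply: NNPP => hn.
have hc2 : (codim (Wr S) + \dim <[lsubmx M]> + 1 <= n)%N.
  have := leq_b1 (lsubmx M != 0); rewrite -dim_vline.
  move: hc'; move: (codim (Wr S)) (\dim <[lsubmx M]>%VS) => a b; lia.
have [w' w'W hw] := Bstar (rsubmx M) hc2 (introN idP hn).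
set M2 := M + row_mx 0 w'.
have M2S : M2 \in S by rewrite memvD // Wr_mem.
have hl2 : lsubmx M2 = lsubmx M by rewrite /M2 linearD /= row_mxKl addr0.
have hr2 : rsubmx M2 = rsubmx M + w' by rewrite /M2 linearD /= row_mxKr.
have e2 : G M - rsubmx M *m y = G M2 - rsubmx M2 *m y by apply: fib.
have [z ez] := Grc _ M2S.
apply: hw; exists (lsubmx M *m usubmx z).
  by rewrite mul_c11 memvZ // memv_line.
exists (dsubmx z - y).
by rewrite e2 ez -[M2 in M2 *m z]hsubmxK row_mul_split hl2 hr2 mulmxBr addrA.
Qed.

Lemma ThmA (K : fieldType) n p : ThmA_at K n p.
Proof.
elim: p => [|p IH].
  move=> S G hc Gadd Grc; exists 0 => M MS.
  by have [z ->] := Grc M MS; rewrite (thinmx0 M) !mul0mx.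
change p.+1 with (1 + p)%N; move=> S G hc Gadd Grc.
have hWv := dim_Wv_le S; have F2 := dim_WrWv S.
have hc1 : (codim S + \dim (Wv S) + 2 <= 2 * n)%N.
  move: hc hWv; move: (codim S) (\dim (Wv S)) => a b; lia.
have [y [hin hfib]] := Step IH hc1 Gadd Grc.
pose H M := G M - rsubmx M *m y.
have Hadd : {in S &, forall A B, H (A + B) = H A + H B}.
  by move=> A B AS BS; rewrite /H Gadd // linearD /= mulmxDl opprD addrACA.
have hdim2 : (2 <= \dim (Wv S))%N.
  move: hc F2; move: (codim S) (codim (Wr S)) (\dim (Wv S)) => a b c; lia.
have [M0 M0S nz0] : exists2 M0, M0 \in S & lsubmx M0 != 0.
  have : ~~ (Wv S <= 0)%VS.
    apply/negP => /dimvS; rewrite dimv0.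
    by move: hdim2; move: (\dim (Wv S)) => a; lia.
  by case/subvPn=> c /Wv_memP[M1 M1S <-]; rewrite memv0 => nz; exists M1.
have lam : forall M, M \in S -> exists l, H M = l *: lsubmx M.
  by move=> M MS; apply/vlineP/hin.
have pair : forall A B la lb, A \in S -> B \in S -> lsubmx A != 0 ->
    lsubmx B \notin <[lsubmx A]>%VS -> H A = la *: lsubmx A ->
    H B = lb *: lsubmx B -> la = lb.
  move=> A B la lb AS BS nzA nB hA hB.
  have [mu hmu] := lam (A + B) (memvD AS BS).
  rewrite Hadd // hA hB linearD /= scalerDr in hmu.
  have e := lin2 hmu.
  have elb : lb = mu.
    apply/eqP; rewrite -subr_eq0; apply/negPn/negP => hne; move: nB.
    suff -> : lsubmx B = ((lb - mu)^-1 * (mu - la)) *: lsubmx A by rewrite memvZ ?memv_line.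
    rewrite -scalerA -e scalerA mulVf ?scale1r //.
  rewrite elb subrr scale0r in e.
  move/esym/eqP: e; rewrite scaler_eq0 (negPf nzA) orbF subr_eq0 => /eqP e'.
  by rewrite -e' elb.
have [l0 h0] := lam M0 M0S.
have allM : forall M, M \in S -> H M = l0 *: lsubmx M.
  move=> M MS; have [l hl] := lam M MS.
  case: (boolP (lsubmx M \in <[lsubmx M0]>%VS)) => hM; last first.
    by rewrite hl -(pair M0 M l0 l).
  have [M1 M1S n1] : exists2 M1, M1 \in S & lsubmx M1 \notin <[lsubmx M0]>%VS.
    have : ~~ (Wv S <= <[lsubmx M0]>)%VS.
      apply/negP => /dimvS; rewrite dim_vline.
      by move: hdim2; move: (\dim (Wv S)) (lsubmx M0 != 0) => a [] /=; lia.
    by case/subvPn => c /Wv_memP[M1 M1S <-] h; exists M1.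
  have [l1 hl1] := lam M1 M1S.
  have e1 := pair M0 M1 l0 l1 M0S M1S nz0 n1 h0 hl1.
  case: (eqVneq (lsubmx M) 0) => [z|nzM].
    by rewrite hl z !scaler0.
  have n1' : lsubmx M1 \notin <[lsubmx M]>%VS.
    apply: contra n1 => /vlineP[k ->]; case/vlineP: hM => j ->.
    by rewrite scalerA memvZ // memv_line.
  by rewrite hl (pair M M1 l l1) // -e1.
exists (col_mx l0%:M y) => M MS.
rewrite -[M in M *m _]hsubmxK mul_row_col mul_mx_scalar -allM //.
by rewrite /H subrK.
Qed.

Definition e1 (K : fieldType) (n' : nat) : 'cV[K]_(1 + n') := col_mx 1 0.

Lemma e1_00 (K : fieldType) n' : (e1 K n') 0 0 = 1.
Proof.
rewrite /e1; have -> : (0 : 'I_(1 + n')) = lshift n' 0 by apply/val_inj.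
by rewrite col_mxEu mxE.
Qed.

Lemma lsub_block (K : fieldType) m1 m2 n1 n2 (M : 'M[K]_(m1 + m2, n1 + n2)) :
  lsubmx M = col_mx (ulsubmx M) (dlsubmx M).
Proof. by rewrite -{1}[M]submxK block_mxEh row_mxKl. Qed.

Lemma rsub_block (K : fieldType) m1 m2 n1 n2 (M : 'M[K]_(m1 + m2, n1 + n2)) :
  rsubmx M = col_mx (ursubmx M) (drsubmx M).
Proof. by rewrite -{1}[M]submxK block_mxEh row_mxKr. Qed.

Lemma lsub_shape (K : fieldType) n' p' (M : 'M[K]_(1 + n', 1 + p')) :
  dlsubmx M = 0 -> lsubmx M = (ulsubmx M 0 0) *: e1 K n'.
Proof.
move=> h; rewrite lsub_block h /e1 scale_col_mx scaler0 scalemx1.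
by rewrite -mx11_scalar.
Qed.

Lemma Core (K : fieldType) n' p' (S : {vspace 'M[K]_(1 + n', 1 + p')})
  (G : 'M[K]_(1 + n', 1 + p') -> 'cV[K]_(1 + n')) :
  (codim S + 3 <= 2 * (1 + n'))%N -> {in S, forall M, dlsubmx M = 0} ->
  (exists2 M, M \in S & lsubmx M != 0) ->
  {in S &, forall A B, G (A + B) = G A + G B} ->
  {in S, forall M, exists z, G M = M *m z} ->
  exists (y : 'cV[K]_p') (rho : K -> K), {morph rho : a b / a + b} /\
   {in S, forall M, G M = rho (ulsubmx M 0 0) *: e1 K n' + rsubmx M *m y}.
Proof.
move=> hc hshape [Ms MsS nzs] Gadd Grc.
have hWv1 : (Wv S <= <[e1 K n']>)%VS.
  apply/subvP=> c /Wv_memP[M MS <-].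
  by rewrite (lsub_shape (hshape M MS)) memvZ // memv_line.
have hd1 : (\dim (Wv S) <= 1)%N.
  by apply: leq_trans (dimvS hWv1) _; rewrite dim_vline leq_b1.
have hc1 : (codim S + \dim (Wv S) + 2 <= 2 * (1 + n'))%N.
  by move: hc hd1; move: (codim S) (\dim (Wv S)) => a b; lia.
have [y [hin hfib]] := Step (@ThmA K _ p') hc1 Gadd Grc.
pose H M := G M - rsubmx M *m y.
have Hadd : {in S &, forall A B, H (A + B) = H A + H B}.
  by move=> A B AS BS; rewrite /H Gadd // linearD /= mulmxDl opprD addrACA.
pose as_ := ulsubmx Ms 0 0.
have hs : lsubmx Ms = as_ *: e1 K n' by apply: lsub_shape; apply: hshape.
have as0 : as_ != 0.
  by apply: contraNneq nzs => e; rewrite hs e scale0r.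
have hH : forall M, M \in S -> H M = (H M 0 0) *: e1 K n'.
  move=> M MS; have := hin M MS; rewrite (lsub_shape (hshape M MS)).
  rewrite /H; case/vlineP=> k; rewrite scalerA => ->.
  by rewrite [(_ *: e1 K n') 0 0]mxE e1_00 mulr1.
pose rho t := H ((t / as_) *: Ms) 0 0.
exists y, rho; split.
  move=> s t; rewrite /rho mulrDl scalerDl Hadd ?memvZ // mxE.
  done.
move=> M MS.
set a := ulsubmx M 0 0.
have e : H M = H ((a / as_) *: Ms).
  apply: hfib; rewrite ?memvZ //.
  by rewrite linearZ /= hs scalerA mulfVK // -lsub_shape //; apply: hshape.
have -> : G M = H M + rsubmx M *m y by rewrite /H subrK.
by rewrite e hH ?memvZ.
Qed.

Lemma incolT (K : fieldType) m n1 n2 (A : 'M[K]_(m, n1)) (B : 'M[K]_(m, n2)) :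
  (A^T <= B^T)%MS -> forall v : 'cV[K]_n1, exists t : 'cV[K]_n2, A *m v = B *m t.
Proof.
case/submxP=> D hD v; exists (D^T *m v).
by rewrite -[A]trmxK hD trmx_mul trmxK mulmxA.
Qed.

Lemma morph0 (K : fieldType) (V : zmodType) (rv : K -> V) :
  {morph rv : a b / a + b} -> rv 0 = 0.
Proof. by move=> h; apply/eqP; rewrite -(subrr (rv 0)) -{2}[0]addr0 h addrK. Qed.

Lemma ul00 (K : fieldType) n' p' (M : 'M[K]_(1 + n', 1 + p')) :
  ulsubmx M 0 0 = lsubmx M 0 0.
Proof. by rewrite !mxE; congr (M _ _); apply/val_inj. Qed.

Lemma Decomp (K : fieldType) n' p' (S : {vspace 'M[K]_(1 + n', 1 + p')})
  (hc : (codim S + 3 <= 2 * (1 + n'))%N)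
  (hshape : {in S, forall M, dlsubmx M = 0})
  (hcol : exists2 M, M \in S & lsubmx M != 0) q
  (F : 'M[K]_(1 + n', 1 + p') -> 'M[K]_(1 + n', q)) :
  range_preserving_hom S F ->
  exists (Y : 'M[K]_(p', q)) (rv : K -> 'rV[K]_q), {morph rv : a b / a + b} /\
   {in S, forall M, F M = e1 K n' *m rv (ulsubmx M 0 0) + rsubmx M *m Y}.
Proof.
move=> [Fadd Fcol].
have h : forall j : 'I_q, exists yr : 'cV[K]_p' * (K -> K),
   {morph yr.2 : a b / a + b} /\
   {in S, forall M, col j (F M) = yr.2 (ulsubmx M 0 0) *: e1 K n' + rsubmx M *m yr.1}.
  move=> j.
  have [||y [r [h1 h2]]] := @Core K n' p' S (fun M => col j (F M)) hc hshape hcol.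
  - by move=> A B AS BS /=; rewrite Fadd // linearD.
  - move=> M MS /=; rewrite colE; apply: incolT.
    by case/andP: (Fcol M MS).
  by exists (y, r).
have [f hf] := fin_all_exists h.
exists (\matrix_(i, j) (f j).1 i 0), (fun a => \row_j (f j).2 a); split.
  by move=> a b; apply/rowP => j; rewrite !mxE (hf j).1.
move=> M MS; apply/matrixP => i j.
have := congr1 (fun X : 'cV[K]_(1 + n') => X i 0) ((hf j).2 M MS).
rewrite !mxE big_ord1 !mxE => ->.
rewrite mulrC; congr (_ + _); apply: eq_bigr => k _; rewrite !mxE //.
Qed.

Lemma Wv_le1 (K : fieldType) n' p' (S : {vspace 'M[K]_(1 + n', 1 + p')}) :
  {in S, forall M, dlsubmx M = 0} -> (\dim (Wv S) <= 1)%N.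
Proof.
move=> hshape.
have hWv1 : (Wv S <= <[e1 K n']>)%VS.
  apply/subvP=> c /Wv_memP[M MS <-].
  by rewrite (lsub_shape (hshape M MS)) memvZ // memv_line.
by apply: leq_trans (dimvS hWv1) _; rewrite dim_vline leq_b1.
Qed.

Lemma rp_rev (K : fieldType) m p q (S : {vspace 'M[K]_(m, p)}) F :
  range_preserving_hom S F ->
  forall M, M \in S -> forall v : 'cV[K]_p, exists t : 'cV[K]_q, M *m v = F M *m t.
Proof. by move=> [_ Fcol] M MS; apply: incolT; case/andP: (Fcol M MS). Qed.

Lemma mul_usub0 (K : fieldType) m p q (A : 'M[K]_(m, 1 + p)) (B : 'M[K]_(1 + p, q)) :
  usubmx B = 0 -> A *m B = rsubmx A *m dsubmx B.
Proof. by move=> h; rewrite -{1}[A]hsubmxK -{1}[B]vsubmxK mul_row_col h mulmx0 add0r. Qed.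

Lemma mul_c10 (K : fieldType) m p (A : 'M[K]_(m, 1 + p)) :
  A *m col_mx 1 0 = lsubmx A.
Proof. by rewrite -{1}[A]hsubmxK mul_row_col mulmx1 mulmx0 addr0. Qed.

Lemma Dz (K : fieldType) n' p' (S : {vspace 'M[K]_(1 + n', 1 + p')})
  (hc : (codim S + 3 <= 2 * (1 + n'))%N)
  (hshape : {in S, forall M, dlsubmx M = 0}) q
  (F : 'M[K]_(1 + n', 1 + p') -> 'M[K]_(1 + n', q))
  (rp : range_preserving_hom S F) (Y : 'M[K]_(p', q)) (rv : K -> 'rV[K]_q)
  (hmorph : {morph rv : a b / a + b})
  (hrep : {in S, forall M, F M = e1 K n' *m rv (ulsubmx M 0 0) + rsubmx M *m Y})
  (z : 'rV[K]_p') : z != 0 -> z *m Y = 0 -> False.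
Proof.
case: p' S hc hshape F rp Y hrep z => [|p] S hc hshape F rp Y hrep z.
  by rewrite (thinmx0 z) eqxx.
move=> znz zY.
have F2 := dim_WrWv S; have hd1 := Wv_le1 hshape.
have hcr : (codim (Wr S) + 2 <= 1 + n')%N.
  by move: hc F2 hd1; move: (codim S) (codim (Wr S)) (\dim (Wv S)) => a b c; lia.
have rv0 := morph0 hmorph.
have Fcol' := rp_rev rp.
pose U := row_ebase z; pose C := col_ebase z; pose P := invmx U.
have Uu : U \in unitmx := row_ebase_unit z.
have Pu : P \in unitmx by rewrite unitmx_inv.
have rz : \rank z = 1%N.
  have := rank_leq_row z; have : \rank z != 0%N by rewrite mxrank_eq0.
  by move: (\rank z) => r; lia.
have ez : z = C *m pid_mx 1 *m U by rewrite -{1}(mulmx_ebase z) rz.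
pose V : 'M[K]_(1 + p, q) := U *m Y.
have V0 : usubmx V = 0 :> 'M_(1, q).
  have : C *m (pid_mx 1 *m V) = 0 by rewrite /V !mulmxA -ez.
  rewrite (@pid_mx_row _ p) -{1}[V]vsubmxK mul_row_col mul0mx addr0 mul1mx => h.
  by rewrite -[usubmx V](mulKmx (col_ebase_unit z)) h mulmx0.
have hYV : Y = P *m V by rewrite /P /V mulKmx.
pose f := linfun (mulmxr P : 'M[K]_(1 + n', 1 + p) -> 'M[K]_(1 + n', 1 + p)).
pose SP : {vspace 'M[K]_(1 + n', 1 + p)} := (f @: Wr S)%VS.
have SPmem : forall X, X \in SP -> X *m invmx P \in Wr S.
  by move=> X /memv_imgP[N NS ->]; rewrite lfunE /= mulmxK.
have dimSP : \dim SP = \dim (Wr S).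
  apply: limg_dim_eq; apply/eqP; rewrite -subv0; apply/subvP => N.
  case/memv_capP=> _; rewrite memv_ker lfunE /= memv0 => /eqP h0.
  by rewrite -[N](mulmxK Pu) h0 mul0mx.
have cSP : codim SP = codim (Wr S) by rewrite /codim dimSP.
have F2' := dim_WrWv SP; have hWv' := dim_Wv_le SP.
have [N0 N0S nz0] : exists2 N0, N0 \in SP & lsubmx N0 != 0.
  have : ~~ (Wv SP <= 0)%VS.
    apply/negP => /dimvS; rewrite dimv0.
    by move: F2' cSP hcr; move: (codim SP) (codim (Wr SP)) (codim (Wr S)) (\dim (Wv SP)) => a b c d; lia.
  by case/subvPn=> c /Wv_memP[M1 M1S <-]; rewrite memv0 => nz; exists M1.
have hc3 : (codim (Wr SP) + \dim (0%VS : {vspace 'cV[K]_(1 + n')}) + 1 <= 1 + n')%N.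
  rewrite dimv0.
  by move: F2' cSP hcr hWv'; move: (codim SP) (codim (Wr SP)) (codim (Wr S)) (\dim (Wv SP)) => a b c d; lia.
have nin : lsubmx N0 \notin (0%VS : {vspace 'cV[K]_(1 + n')}) by rewrite memv0.
have [w' w'W hw] := Bstar (rsubmx N0) hc3 nin.
set Nt := N0 + row_mx 0 w'.
have NtS : Nt \in SP by rewrite memvD // Wr_mem.
have hl : lsubmx Nt = lsubmx N0 by rewrite /Nt linearD /= row_mxKl addr0.
have hr : rsubmx Nt = rsubmx N0 + w' by rewrite /Nt linearD /= row_mxKr.
set N := Nt *m invmx P.
have NS : N \in Wr S := SPmem Nt NtS.
pose M : 'M[K]_(1 + n', 1 + p.+1) := row_mx 0 N.
have MS : M \in S := Wr_mem NS.
have FM : F M = rsubmx Nt *m dsubmx V.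
  rewrite hrep // ul00 row_mxKl mxE rv0 mulmx0 add0r row_mxKr hYV mulmxA.
  by rewrite /N mulmxKV //; apply: mul_usub0.
have hc0 : lsubmx N0 = M *m col_mx 0 (P *m (col_mx 1 0 : 'M[K]_(1 + p, 1))).
  rewrite /M mul_row_col mul0mx add0r mulmxA /N mulmxKV //.
  by rewrite mul_c10 hl.
have [t ht] := Fcol' M MS (col_mx 0 (P *m (col_mx 1 0 : 'M[K]_(1 + p, 1)))).
apply: hw; exists 0; first exact: mem0v.
exists (dsubmx V *m t).
by rewrite add0r hc0 ht FM hr mulmxA.
Qed.

Lemma Dprop (K : fieldType) n' p' (S : {vspace 'M[K]_(1 + n', 1 + p')})
  (hc : (codim S + 3 <= 2 * (1 + n'))%N)
  (hshape : {in S, forall M, dlsubmx M = 0})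
  (hcol : exists2 M, M \in S & lsubmx M != 0) q
  (F : 'M[K]_(1 + n', 1 + p') -> 'M[K]_(1 + n', q))
  (rp : range_preserving_hom S F) (Y : 'M[K]_(p', q)) (rv : K -> 'rV[K]_q)
  (hmorph : {morph rv : a b / a + b})
  (hrep : {in S, forall M, F M = e1 K n' *m rv (ulsubmx M 0 0) + rsubmx M *m Y})
  a (z : 'rV[K]_p') : rv a + z *m Y = 0 -> a = 0 /\ z = 0.
Proof.
move=> h.
have F2 := dim_WrWv S; have hd1 := Wv_le1 hshape.
have hcr : (codim (Wr S) + 2 <= 1 + n')%N.
  by move: hc F2 hd1; move: (codim S) (codim (Wr S)) (\dim (Wv S)) => x y w; lia.
have Fcol' := rp_rev rp.
have a0 : a = 0.
  case: (eqVneq a 0) => // anz; exfalso.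
  case: hcol => Ms MsS nzs.
  pose as_ := ulsubmx Ms 0 0.
  have as0 : as_ != 0.
    by apply: contraNneq nzs => e; rewrite (lsub_shape (hshape Ms MsS)) -/as_ e scale0r.
  pose Ma := (a / as_) *: Ms.
  have MaS : Ma \in S by rewrite memvZ.
  have e1nz : e1 K n' \notin 0%VS.
    rewrite memv0; apply/eqP => e; have := e1_00 K n'.
    by rewrite e mxE => /eqP; rewrite eq_sym oner_eq0.
  have hc2 : (codim (Wr S) + \dim (0%VS : {vspace 'cV[K]_(1 + n')}) + 1 <= 1 + n')%N.
    by rewrite dimv0; move: hcr; move: (codim (Wr S)) => x; lia.
  have [D DW hD] := Bstar (rsubmx Ma - e1 K n' *m z) hc2 e1nz.
  pose M := Ma + row_mx 0 D.
  have MS : M \in S by rewrite memvD // Wr_mem.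
  have hl : lsubmx M = lsubmx Ma by rewrite /M linearD /= row_mxKl addr0.
  have hr : rsubmx M = rsubmx Ma + D by rewrite /M linearD /= row_mxKr.
  have haM : ulsubmx M 0 0 = a.
    by rewrite ul00 hl /Ma linearZ /= mxE -ul00 -/as_ mulfVK.
  have hrv : rv a = - (z *m Y) by apply/eqP; rewrite -addr_eq0 h.
  have FM : F M = (rsubmx M - e1 K n' *m z) *m Y.
    by rewrite hrep // haM hrv mulmxN mulmxA mulmxBl addrC.
  have [t ht] := Fcol' M MS (col_mx (a^-1)%:M 0).
  have hMe : M *m col_mx (a^-1)%:M 0 = e1 K n'.
    rewrite -[M]hsubmxK mul_row_col mulmx0 addr0 (lsub_shape (hshape M MS)) haM.
    by rewrite mul_mx_scalar scalerA mulVf // scale1r.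
  apply: hD; exists 0; first exact: mem0v.
  exists (Y *m t).
  by rewrite add0r -{1}hMe ht FM hr mulmxA addrAC.
split => //.
move: h; rewrite a0 (morph0 hmorph) add0r => zY.
case: (eqVneq z 0) => // znz; exfalso.
exact: (Dz hc hshape rp hmorph hrep znz zY).
Qed.

Lemma subT (K : fieldType) m n1 n2 (A : 'M[K]_(m, n1)) (B : 'M[K]_(m, n2)) T :
  A = B *m T -> (A^T <= B^T)%MS.
Proof. by move=> ->; rewrite trmx_mul submxMl. Qed.

Lemma ulD (K : fieldType) n' p' (A B : 'M[K]_(1 + n', 1 + p')) :
  ulsubmx (A + B) 0 0 = ulsubmx A 0 0 + ulsubmx B 0 0.
Proof. by rewrite !mxE. Qed.

Lemma rp_formula (K : fieldType) n' p' r (S : {vspace 'M[K]_(1 + n', 1 + p')})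
  (Q : 'M[K]_(r + p')) (R : K -> 'rV[K]_r) (R' : K -> 'rV[K]_p')
  (F : 'M[K]_(1 + n', 1 + p') -> 'M[K]_(1 + n', r + p')) :
  {in S, forall M, dlsubmx M = 0} ->
  Q \in unitmx -> {morph R : x y / x + y} -> {morph R' : x y / x + y} ->
  injective R ->
  {in S, forall M, F M = block_mx (R (ulsubmx M 0 0))
                             (ursubmx M + R' (ulsubmx M 0 0))
                             0 (drsubmx M) *m Q} ->
  range_preserving_hom S F.
Proof.
move=> hshape Qu Rm R'm Rinj hF; split.
  move=> A B AS BS; rewrite !hF ?memvD // -mulmxDl add_block_mx addr0.
  congr (block_mx _ _ _ _ *m Q).
  - by rewrite ulD Rm.
  - have -> : ursubmx (A + B) = ursubmx A + ursubmx B.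
      by apply/matrixP => i j; rewrite !mxE.
    by rewrite ulD R'm addrACA.
  - by apply/matrixP => i j; rewrite !mxE.
move=> M MS; rewrite /same_colspace hF //.
set a := ulsubmx M 0 0.
set B := block_mx _ _ _ _.
have eM : M = block_mx a%:M (ursubmx M) 0 (drsubmx M).
  by rewrite -{1}[M]submxK (hshape M MS) {1}[ulsubmx M]mx11_scalar.
have R0 := morph0 Rm; have R'0 := morph0 R'm.
have [T1 hT1] : exists T1, B = M *m T1.
  exists (block_mx (a^-1 *: R a) (a^-1 *: R' a) 0 1).
  rewrite [M in M *m _]eM mulmx_block !mulmx0 !mul0mx !mulmx1 !addr0 !add0r !mul_scalar_mx !scalerA.
  rewrite /B; case: (eqVneq a 0) => [->|anz]; first by rewrite R0 R'0 !mul0r !scale0r addr0 add0r.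
  by rewrite mulfV // !scale1r addrC.
have [T2 hT2] : exists T2, M = B *m T2.
  case: (eqVneq a 0) => [a0|anz].
    exists (block_mx 0 0 0 1).
    rewrite /B mulmx_block !mulmx0 !mulmx1 !addr0 !add0r {1}eM a0 R'0 addr0.
    by rewrite -scalemx1 scale0r.
  have Ranz : R a != 0.
    apply/eqP => h; have ea : a = 0 by apply: Rinj; rewrite h R0.
    by move/eqP: anz.
  have [j hj] : exists j, R a 0 j != 0.
    apply: NNPP => hn; move/negP: Ranz; apply; apply/eqP/rowP => j.
    rewrite mxE; apply/eqP; apply: NNPP => h; apply: hn; exists j; exact/negP.
  set c := R a 0 j.
  have hc : R a *m delta_mx j 0 = c%:M.
    by rewrite -colE [col j (R a)]mx11_scalar mxE.
  exists (block_mx ((a / c) *: delta_mx j 0) (- (c^-1 *: (delta_mx j 0 *m R' a))) 0 1).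
  rewrite /B mulmx_block !mulmx0 !mul0mx !mulmx1 !addr0 !add0r {1}eM.
  rewrite mulmxN -!scalemxAr mulmxA hc scale_scalar_mx mulfVK //.
  by rewrite mul_scalar_mx scalerA mulVf // scale1r addrCA addNr addr0.
apply/andP; split.
  by apply: (subT (T := T1 *m Q)); rewrite hT1 mulmxA.
apply: (subT (T := invmx Q *m T2)).
by rewrite mulmxA mulmxK.
Qed.

Lemma rowfree_inj (K : fieldType) m n (A : 'M[K]_(m, n)) :
  (forall z : 'rV[K]_m, z *m A = 0 -> z = 0) -> row_free A.
Proof.
move=> h; apply/negPn/negP => hn.
have : kermx A != 0.
  rewrite -mxrank_eq0 mxrank_ker.
  move: hn (rank_leq_row A); rewrite /row_free; move: (\rank A) => k; lia.
apply/negP/negPn/eqP/matrixP => i j; rewrite mxE.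
have := h (row i (kermx A)); rewrite -row_mul mulmx_ker.
have -> : row i (0 : 'M[K]_(m, n)) = 0 by apply/rowP => k; rewrite !mxE.
by move/(_ erefl)/rowP/(_ j); rewrite !mxE.
Qed.

Lemma mul_11c (K : fieldType) n (t : 'M[K]_1) (B : 'M[K]_(1, n)) :
  t *m B = t 0 0 *: B.
Proof. by rewrite {1}[t]mx11_scalar mul_scalar_mx. Qed.

Theorem theorem7p6 (K : fieldType) (n' p' : nat)
  (S : {vspace 'M[K]_(1 + n', 1 + p')})
  (hcodim : (codim S + 3 <= 2 * (1 + n'))%N)
  (hshape : {in S, forall M, dlsubmx M = 0})
  (hcol : exists2 M, M \in S & lsubmx M != 0) :
  (forall (r : nat), (0 < r)%N ->
   forall F : 'M[K]_(1 + n', 1 + p') -> 'M[K]_(1 + n', r + p'),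
     range_preserving_hom S F <->
     exists (Q : 'M[K]_(r + p')) (R : K -> 'rV[K]_r) (R' : K -> 'rV[K]_p'),
       [/\ Q \in unitmx,
           {morph R : x y / x + y},
           {morph R' : x y / x + y},
           injective R &
           {in S, forall M,
              F M = block_mx (R (ulsubmx M ord0 ord0))
                             (ursubmx M + R' (ulsubmx M ord0 ord0))
                             0 (drsubmx M) *m Q}])
  /\
  (forall (q : nat), (0 < q)%N ->
     (exists F : 'M[K]_(1 + n', 1 + p') -> 'M[K]_(1 + n', q),
        range_preserving_hom S F) <-> (1 + p' <= q)%N).
Proof.
split.
  move=> r r0 F; split; last first.
    by case=> Q [R [R' [Qu Rm R'm Rinj hF]]]; apply: (rp_formula hshape Qu Rm R'm Rinj hF).
  move=> rp.
  have [Y [rv [hm hrep]]] := Decomp hcodim hshape hcol rp.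
  have hD := Dprop hcodim hshape hcol rp hm hrep.
  have rv0 := morph0 hm.
  have Yfree : row_free Y.
    apply: rowfree_inj => z zY.
    by case: (hD 0 z); rewrite ?rv0 ?add0r.
  have rY : \rank Y = p' by apply/eqP.
  have rC : \rank (Y^C)%MS = r by rewrite mxrank_compl rY addnK.
  pose Z : 'M[K]_(r, r + p') := castmx (rC, erefl) (row_base (Y^C)%MS).
  pose Q := col_mx Z Y.
  have Qu : Q \in unitmx.
    rewrite -row_full_unit /row_full /Q -addsmxE.
    have e : (Z + Y :=: (Y^C)%MS + Y)%MS.
      apply: adds_eqmx => //.
      exact: eqmx_trans (eqmx_cast _ _) (eq_row_base _).
    rewrite e addsmxC.
    exact: addsmx_compl_full.
  pose R a := lsubmx (rv a *m invmx Q).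
  pose R' a := rsubmx (rv a *m invmx Q).
  have hrvQ : forall a, rv a = R a *m Z + R' a *m Y.
    by move=> a; rewrite -mul_row_col hsubmxK mulmxKV.
  exists Q, R, R'; split => //.
  - by move=> a b; rewrite /R hm mulmxDl linearD.
  - by move=> a b; rewrite /R' hm mulmxDl linearD.
  - move=> a b e.
    have hRa : R a = R (a - b) + R b by rewrite /R -linearD -mulmxDl -hm subrK.
    have hR0 : R (a - b) = 0.
      by apply: (@addIr _ (R b)); rewrite -hRa add0r.
    have := hrvQ (a - b); rewrite hR0 mul0mx add0r => ev.
    have := hD (a - b) (- R' (a - b)); rewrite ev mulNmx addrN => /(_ erefl) [hab _].
    by apply/eqP; rewrite -subr_eq0 hab.
  move=> M MS; rewrite hrep // /Q mul_block_col mul0mx add0r.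
  rewrite /e1 mul_col_mx mul1mx mul0mx rsub_block mul_col_mx add_col_mx add0r.
  by rewrite hrvQ mulmxDl -addrA (addrC (R' _ *m Y)).
move=> q q0; split.
  case=> F rp.
  have [Y [rv [hm hrep]]] := Decomp hcodim hshape hcol rp.
  have hD := Dprop hcodim hshape hcol rp hm hrep.
  have rv0 := morph0 hm.
  have Xfree : row_free (col_mx (rv 1) Y).
    apply: rowfree_inj => w hw.
    rewrite -[w]hsubmxK mul_row_col mul_11c in hw.
    have w0 : lsubmx w 0 0 = 0.
      apply: NNPP => /eqP wnz.
      have h1 : rv 1 + ((lsubmx w 0 0)^-1 *: rsubmx w) *m Y = 0.
        move/(congr1 (fun X => (lsubmx w 0 0)^-1 *: X)): hw.
        by rewrite scaler0 scalerDr scalerA mulVf // scale1r scalemxAl.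
      have [e _] := hD _ _ h1.
      by move/eqP: e; rewrite oner_eq0.
    rewrite w0 scale0r add0r in hw.
    have := hD 0 (rsubmx w); rewrite rv0 add0r => /(_ hw) [_ hr].
    rewrite -[w]hsubmxK hr; apply/rowP => j.
    rewrite (mx11_scalar (lsubmx w)) w0 -scalemx1 scale0r row_mx0 //.
  have := rank_leq_col (col_mx (rv 1) Y).
  by rewrite (eqP Xfree).
move=> hq.
have hp : (p' <= q)%N by apply: leq_trans hq; rewrite leq_addl.
have [r er] : exists r, q = (r + p')%N by exists (q - p')%N; rewrite subnK.
subst q.
case: r hp hq q0 => [|r] hp hq q0; first by rewrite add0n ltnn in hq.
exists (fun M => block_mx (ulsubmx M 0 0 *: (const_mx 1 : 'rV[K]_r.+1))
                  (ursubmx M + (fun _ : K => 0 : 'rV[K]_p') (ulsubmx M 0 0))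
                  0 (drsubmx M) *m 1%:M).
apply: (@rp_formula K n' p' r.+1 S 1%:M (fun a => a *: const_mx 1) (fun _ => 0)) => //.
- exact: unitmx1.
- by move=> a b; rewrite scalerDl.
- by move=> a b; rewrite addr0.
- move=> a b /rowP/(_ 0); rewrite !mxE !mulr1 //.
Qed.
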